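(* Let $\lambda,\mu$ be partitions and $x$ an indeterminate, and put $$X_{\lambda\mu}(x):=\prod_{(i,j)\in[\mu]}(j-i-x)\prod_{(i,j)\in [\lambda]}\biggl((j-i-\mu_1+x)\prod_{1\le k\le\mu_1}\frac{j-i+\bar{\mu}_k-k+1+x}{j-i+\bar{\mu}_k-k+x}\biggr).$$ Then $X_{\lambda\mu}(x)=X_{\mu\lambda}(-x)$.
   Context: For a partition $\lambda$, $[\lambda]=\{(i,j): i\ge1,\ 1\le j\le\lambda_i\}$ is its diagram and $\bar\lambda$ is the conjugate partition ($\bar\lambda_k$ = number of $i$ with $\lambda_i\ge k$). *)

(* Defs.v *)
From HB Require Import structures.
From mathcomp Require Import all_boot all_order all_algebra fraction.
Set Implicit Arguments. Unset Strict Implicit. Unset Printing Implicit Defensive.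
Import Order.TTheory GRing.Theory Num.Theory.
Local Open Scope ring_scope.

Definition is_partition (s : seq nat) : bool :=
  sorted geq s && all (fun m => 0 < m)%N s.

(* 1-indexed part: part s i = s_i (0 beyond the length, and for i = 0). *)
Definition part (s : seq nat) (i : nat) : nat := if i is 0 then 0%N else nth 0%N s i.-1.

Definition conj_part (s : seq nat) (k : nat) : nat := count (fun m => k <= m)%N s.

(* X_{lam,mu} evaluated at an element x of a field F.
   Diagram [lam] = {(i,j) : 1 <= i <= size lam, 1 <= j <= lam_i}. *)
Definition Xlm (F : fieldType) (lam mu : seq nat) (x : F) : F :=
  (\prod_(1 <= i < (size mu).+1) \prod_(1 <= j < (part mu i).+1)
      ((j%:Z - i%:Z)%:~R - x)) *
  \prod_(1 <= i < (size lam).+1) \prod_(1 <= j < (part lam i).+1)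
     (((j%:Z - i%:Z - (part mu 1)%:Z)%:~R + x) *
      \prod_(1 <= k < (part mu 1).+1)
        (((j%:Z - i%:Z + (conj_part mu k)%:Z - k%:Z + 1)%:~R + x) /
         ((j%:Z - i%:Z + (conj_part mu k)%:Z - k%:Z)%:~R + x))).

Definition ratfun := {fraction {poly rat}}.
Definition xvar : ratfun := FracField.tofrac ('X : {poly rat}).

(* Main.v *)
Require Import Defs.
From HB Require Import structures.
From mathcomp Require Import all_boot all_order all_algebra fraction.
From mathcomp Require Import ring.
Import Order.TTheory GRing.Theory Num.Theory.
Local Open Scope ring_scope.
Set Implicit Arguments. Unset Strict Implicit. Unset Printing Implicit Defensive.

Lemma xvar_gen (n : int) : n%:~R + xvar != 0.
Proof.
rewrite /xvar.
have -> : (n%:~R : ratfun) = FracField.tofrac (n%:~R : {poly rat}) by rewrite rmorph_int.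
have -> : (n%:~R : {poly rat}) = (n%:~R : rat)%:P by rewrite (rmorph_int polyC).
rewrite -tofracD tofrac_eq0 addrC.
by rewrite -size_poly_eq0 size_XaddC.
Qed.

Lemma tele (F : fieldType) (n m : nat) (f u : nat -> F) :
  (n <= m)%N -> (forall k, (n <= k <= m)%N -> f k != 0) ->
  (forall k, (n <= k < m)%N -> u k = f k.+1 / f k) ->
  \prod_(n <= k < m) u k = f m / f n.
Proof.
move=> nm nz hu; move: nm; rewrite leq_eqVlt => /orP[/eqP e|lt].
  subst m; rewrite big_geq // divff //; apply: nz; by rewrite leqnn.
apply: (telescope_prodf_eq f u) => // k /andP[a b]; apply: nz.
by rewrite (ltnW a) (ltnW b).
Qed.

Lemma tele2 (F : fieldType) (n m : nat) (g u : nat -> F) :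
  (n <= m)%N -> (forall k, (n <= k <= m)%N -> g k != 0) ->
  (forall k, (n <= k < m)%N -> u k = g k / g k.+1) ->
  \prod_(n <= k < m) u k = g n / g m.
Proof.
move=> nm nz hu.
rewrite (@tele _ n m (fun k => (g k)^-1) u) //.
- by rewrite invrK mulrC.
- by move=> k hk; rewrite invr_eq0 nz.
- by move=> k hk; rewrite hu // invrK mulrC.
Qed.

Definition phi (F : fieldType) (w : F) := (w + 1) * (w - 1) / (w * w).

Lemma phiN (F : fieldType) (w : F) : phi (- w) = phi w.
Proof. rewrite /phi mulrNN; congr (_ / _); ring. Qed.

Definition G (F : fieldType) (mu : seq nat) (z : F) :=
  \prod_(1 <= i < (size mu).+1) \prod_(1 <= j < (part mu i).+1)
     phi (z - (j%:Z - i%:Z)%:~R).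

Definition Fm (F : fieldType) (mu : seq nat) (z : F) :=
  (z - (part mu 1)%:R) * \prod_(1 <= k < (part mu 1).+1)
        ((z + ((conj_part mu k)%:Z - k%:Z + 1)%:~R) /
         (z + ((conj_part mu k)%:Z - k%:Z)%:~R)).

Definition generic (F : fieldType) (z : F) := forall n : int, z + n%:~R != 0.

Lemma genS (F : fieldType) (z : F) : generic z -> generic (z + 1).
Proof. move=> g n; have := g (n + 1); apply: contra_neq => <-; ring. Qed.

Lemma G_cons (F : fieldType) r mu (z : F) :
  G (r :: mu) z = (\prod_(1 <= j < r.+1) phi (z - (j%:Z - 1)%:~R)) * G mu (z + 1).
Proof.
rewrite /G /= big_nat_recl //; congr (_ * _).
apply: eq_big_nat => -[|i] // _; apply: eq_bigr => j _; congr phi; ring.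
Qed.

Lemma geq_trans' : transitive geq.
Proof. by move=> a b c h1 h2; exact: leq_trans h2 h1. Qed.

Lemma conj_big mu k : is_partition mu -> (part mu 1 < k)%N -> conj_part mu k = 0%N.
Proof.
case: mu => [|a s] //= /andP[ps _] ak.
rewrite /conj_part /= leqNgt ak /=.
have al := order_path_min geq_trans' ps.
rewrite (eq_in_count (a2 := pred0)) ?count_pred0 // => x xs /=.
have := allP al x xs => /= xa; apply/negbTE; rewrite -ltnNge.
exact: leq_ltn_trans xa ak.
Qed.

Lemma P4 (F : fieldType) r (z : F) : generic z ->
  \prod_(1 <= j < r.+1) phi (z - (j%:Z - 1)%:~R) =
  ((z + 1) / (z + 1 - r%:R)) * ((z - r%:R) / z).
Proof.
move=> gz.
pose g k := z + (2%:Z - k%:Z)%:~R.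
pose f k := z + (1%:Z - k%:Z)%:~R.
have -> : \prod_(1 <= j < r.+1) phi (z - (j%:Z - 1)%:~R) =
   \prod_(1 <= j < r.+1) ((g j / g j.+1) * (f j.+1 / f j)).
  apply: eq_bigr => j _; rewrite /phi /g /f.
  have -> : z + (2%:Z - j.+1%:Z)%:~R = z - (j%:Z - 1)%:~R by ring.
  have -> : z + (1%:Z - j%:Z)%:~R = z - (j%:Z - 1)%:~R by ring.
  rewrite invfM; ring.
rewrite big_split /=.
rewrite (@tele2 _ 1 r.+1 g) //; last by move=> k _; apply: gz.
have -> : \prod_(1 <= i < r.+1) (f i.+1 / f i) = f r.+1 / f 1%N.
  by apply: tele => // k _; apply: gz.
rewrite /g /f.
have -> : z + (2%:Z - 1%:Z)%:~R = z + 1 by ring.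
have -> : z + (2%:Z - r.+1%:Z)%:~R = z + 1 - r%:R by ring.
have -> : z + (1%:Z - r.+1%:Z)%:~R = z - r%:R by ring.
have -> : z + (1%:Z - 1%:Z)%:~R = z by ring.
by [].
Qed.

Lemma P3 (F : fieldType) r mu (z : F) : generic z ->
  (part mu 1 <= r)%N -> (forall k, (part mu 1 < k)%N -> conj_part mu k = 0%N) ->
  Fm (r :: mu) z = (z - r%:R) / (z + 1 - r%:R) * Fm mu (z + 1).
Proof.
move=> gz hr hz.
rewrite /Fm; change (part (r :: mu) 1) with r.
set m := part mu 1 in hr hz *.
pose B k := (z + 1 + ((conj_part mu k)%:Z - k%:Z + 1)%:~R) /
         (z + 1 + ((conj_part mu k)%:Z - k%:Z)%:~R).
have -> : \prod_(1 <= k < r.+1)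
      ((z + ((conj_part (r :: mu) k)%:Z - k%:Z + 1)%:~R) /
       (z + ((conj_part (r :: mu) k)%:Z - k%:Z)%:~R)) = \prod_(1 <= k < r.+1) B k.
  apply: eq_big_nat => k /andP[_ kr].
  rewrite ltnS in kr.
  have -> : conj_part (r :: mu) k = (conj_part mu k).+1 by rewrite /conj_part /= kr.
  rewrite /B; congr (_ / _); ring.
rewrite (big_cat_nat (n := m.+1)) //=.
pose g k := z + (2%:Z - k%:Z)%:~R.
have -> : \prod_(m.+1 <= k < r.+1) B k = g m.+1 / g r.+1.
  apply: tele2 => //; first by move=> k _; apply: gz.
  move=> k /andP[k1 _]; rewrite /B hz // /g.
  congr (_ / _); ring.
rewrite /g.
have -> : z + (2%:Z - r.+1%:Z)%:~R = z + 1 - r%:R by ring.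
have -> : z + (2%:Z - m.+1%:Z)%:~R = z + 1 - m%:R by ring.
ring.
Qed.

Lemma lemA (F : fieldType) mu : is_partition mu ->
  forall z : F, generic z -> Fm mu z = z * G mu z.
Proof.
elim: mu => [|r mu IH] pm z gz.
  by rewrite /Fm /G /= !big_geq // subr0 !mulr1.
have pmu : is_partition mu.
  move: pm; rewrite /is_partition /= => /andP[ps /andP[_ pa]].
  by rewrite pa (path_sorted ps).
have hr : (part mu 1 <= r)%N.
  move: pm; rewrite /is_partition /=; case: mu {IH pmu} => //= a s.
  by case/andP=> /andP[].
rewrite P3 //; last by move=> k; apply: conj_big.
rewrite IH //; last exact: genS.
rewrite G_cons P4 //.
have z0 : z != 0 by have := gz 0; rewrite addr0.
have z1 : z + 1 - r%:R != 0.
  by have := gz (1 - r%:Z); apply: contra_neq => <-; ring.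
field.
by rewrite z0 z1.
Qed.

Lemma XlmE (F : fieldType) lam mu (x : F) : is_partition mu ->
  (forall n : int, n%:~R + x != 0) ->
  Xlm lam mu x =
  (\prod_(1 <= i < (size mu).+1) \prod_(1 <= j < (part mu i).+1)
      ((j%:Z - i%:Z)%:~R - x)) *
  ((\prod_(1 <= i < (size lam).+1) \prod_(1 <= j < (part lam i).+1)
      ((j%:Z - i%:Z)%:~R + x)) *
   (\prod_(1 <= i < (size lam).+1) \prod_(1 <= j < (part lam i).+1)
      G mu ((j%:Z - i%:Z)%:~R + x))).
Proof.
move=> pm gx; rewrite /Xlm; congr (_ * _).
rewrite -big_split; apply: eq_bigr => i _.
rewrite -big_split; apply: eq_bigr => j _.
rewrite /= -lemA //; last first.
  by move=> n; have := gx ((j%:Z - i%:Z) + n); apply: contra_neq => <-; ring.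
rewrite /Fm; congr (_ * _); first ring.
by apply: eq_bigr => k _; congr (_ / _); ring.
Qed.

Lemma exch2 (F : comRingType) (rI : seq nat) (rJ : nat -> seq nat)
  (rK : seq nat) (rL : nat -> seq nat) (H : nat -> nat -> nat -> nat -> F) :
  \prod_(i <- rI) \prod_(j <- rJ i) \prod_(k <- rK) \prod_(l <- rL k) H i j k l =
  \prod_(k <- rK) \prod_(l <- rL k) \prod_(i <- rI) \prod_(j <- rJ i) H i j k l.
Proof.
have e1 : forall i, \prod_(j <- rJ i) \prod_(k <- rK) \prod_(l <- rL k) H i j k l =
   \prod_(k <- rK) \prod_(l <- rL k) \prod_(j <- rJ i) H i j k l.
  move=> i; rewrite exchange_big; apply: eq_bigr => k _; exact: exchange_big.
under eq_bigr do rewrite e1.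
rewrite exchange_big; apply: eq_bigr => k _; exact: exchange_big.
Qed.

Unset Implicit Arguments. Set Strict Implicit.

Theorem corollary3p3 (lam mu : seq nat) :
  is_partition lam -> is_partition mu ->
  Xlm lam mu xvar = Xlm mu lam (- xvar).
Proof.
move=> pl pm.
rewrite (@XlmE _ lam mu xvar pm); last exact: xvar_gen.
rewrite [RHS](@XlmE _ mu lam (- xvar) pl); last first.
  move=> n; have := xvar_gen (- n); apply: contra_neq => h.
  by rewrite -oppr0 -h; ring.
under [in RHS]eq_bigr do under eq_bigr do rewrite opprK.
rewrite mulrCA; congr (_ * (_ * _)).
rewrite /G exch2; apply: eq_bigr => i _; apply: eq_bigr => j _.
apply: eq_bigr => k _; apply: eq_bigr => l _.
rewrite -phiN; congr phi; ring.
Qed.
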